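(* If $\xi\in\mathfrak I(\mathrm{SU}(n))\subseteq\mathfrak I(\mathrm U(n))$, then $U_\xi(\mathrm{SU}(n))=U_\xi(\mathrm U(n))$.
   Context: For a compact matrix group $G\subseteq\mathrm U(n)$ with maximal torus Lie algebra $\mathfrak t$ (for $\mathrm U(n)$: diagonal skew-Hermitian matrices; for $\mathrm{SU}(n)$: traceless ones), $\mathfrak I(G)=(2\pi)^{-1}\exp^{-1}(e)\cap\mathfrak t$ and $\gamma_\xi(\lambda)=\exp(-\sqrt{-1}\ln(\lambda)\xi)$. $\Omega_{\mathrm{alg}}G$: loops $\gamma:S^1\to G$, $\gamma(1)=e$, with $\gamma,\gamma^{-1}$ having finite Fourier series; $\Lambda^+_{\mathrm{alg}}G^{\mathbb C}$: loops in $G^{\mathbb C}$ ($\mathrm{GL}(n,\mathbb C)$ resp. $\mathrm{SL}(n,\mathbb C)$) that are polynomials in $\lambda$ with polynomial inverse. $H^n_+$ is the closed span of $\lambda^ie_j$, $i\ge0$, in $L^2(S^1,\mathbb C^n)$. $U_\xi(G)=\{\gamma\in\Omega_{\mathrm{alg}}G:\gamma H^n_+=\Psi\gamma_\xi H^n_+\text{ for some }\Psi\in\Lambda^+_{\mathrm{alg}}G^{\mathbb C}\}$, regarded as a set of subspaces $\gamma H^n_+$ (equivalently loops). *)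

(* Defs.v *)
From HB Require Import structures.
From mathcomp Require Import all_boot all_order all_algebra.
Set Implicit Arguments. Unset Strict Implicit. Unset Printing Implicit Defensive.
Import Order.TTheory GRing.Theory Num.Theory.
Local Open Scope ring_scope.

(* C : a numeric closed field (e.g. the complex numbers); it carries the
   complex conjugation z^* and the imaginary unit 'i. *)

Definition on_circle (C : numClosedFieldType) (z : C) : bool := `|z| == 1.

Definition evalmx (C : numClosedFieldType) (m p : nat) (P : 'M[{poly C}]_(m, p))
  (z : C) : 'M[C]_(m, p) := \matrix_(i, j) (P i j).[z].

(* loops: maps S^1 -> M_n(C); only values on the unit circle are ever used *)
Definition loop (C : numClosedFieldType) (n : nat) := C -> 'M[C]_n.

Definition ctrans (C : numClosedFieldType) (n : nat) (A : 'M[C]_n) : 'M[C]_n :=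
  (map_mx Num.conj A)^T.

(* finite Fourier series: gamma(z) = z^-N P(z) on S^1 with P polynomial *)
Definition is_laurent (C : numClosedFieldType) (n : nat) (g : loop C n) : Prop :=
  exists (N : nat) (P : 'M[{poly C}]_n),
    forall z, on_circle z -> g z = z ^- N *: evalmx P z.

Definition is_poly_loop (C : numClosedFieldType) (n : nat) (g : loop C n) : Prop :=
  exists P : 'M[{poly C}]_n, forall z, on_circle z -> g z = evalmx P z.

Definition loop_inverse (C : numClosedFieldType) (n : nat) (g h : loop C n) : Prop :=
  forall z, on_circle z -> g z *m h z = 1%:M /\ h z *m g z = 1%:M.

Definition in_U (C : numClosedFieldType) (n : nat) (g : loop C n) : Prop :=
  forall z, on_circle z -> ctrans (g z) *m g z = 1%:M.

Definition in_SU (C : numClosedFieldType) (n : nat) (g : loop C n) : Prop :=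
  in_U g /\ forall z, on_circle z -> \det (g z) = 1.

Definition in_GL (C : numClosedFieldType) (n : nat) (g : loop C n) : Prop :=
  forall z, on_circle z -> g z \in unitmx.

Definition in_SL (C : numClosedFieldType) (n : nat) (g : loop C n) : Prop :=
  forall z, on_circle z -> \det (g z) = 1.

Definition Omega_alg (C : numClosedFieldType) (n : nat) (G : loop C n -> Prop)
  (g : loop C n) : Prop :=
  [/\ G g, g 1 = 1%:M, is_laurent g &
      exists h, loop_inverse g h /\ is_laurent h].

Definition Lambda_plus (C : numClosedFieldType) (n : nat) (GC : loop C n -> Prop)
  (Psi : loop C n) : Prop :=
  [/\ GC Psi, is_poly_loop Psi &
      exists Q, loop_inverse Psi Q /\ is_poly_loop Q].

(* the subspace gamma H^n_+, represented by its algebraic part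
   { gamma f | f a polynomial C^n-valued loop } (functions on S^1) *)
Definition in_subspace (C : numClosedFieldType) (n : nat) (g : loop C n)
  (v : C -> 'cV[C]_n) : Prop :=
  exists f : 'cV[{poly C}]_n, forall z, on_circle z -> v z = g z *m evalmx f z.

Definition same_subspace (C : numClosedFieldType) (n : nat) (g1 g2 : loop C n) : Prop :=
  forall v : C -> 'cV[C]_n, in_subspace g1 v <-> in_subspace g2 v.

(* an element xi of I(U(n)) is diag(i k_1, ..., i k_n) with k_j integers *)
Definition xi_of (C : numClosedFieldType) (n : nat) (k : 'I_n -> int) : 'M[C]_n :=
  diag_mx (\row_j (Num.imaginary * (k j)%:~R)).

(* gamma_xi(lambda) = exp(-i ln(lambda) xi) = diag(lambda^{k_1},...,lambda^{k_n}) *)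
Definition gamma_xi (C : numClosedFieldType) (n : nat) (k : 'I_n -> int) : loop C n :=
  fun z => diag_mx (\row_j (z ^ (k j))).

Definition U_xi (C : numClosedFieldType) (n : nat) (G GC : loop C n -> Prop)
  (k : 'I_n -> int) (g : loop C n) : Prop :=
  Omega_alg G g /\
  exists Psi, Lambda_plus GC Psi /\
    same_subspace g (fun z => Psi z *m gamma_xi k z).

(* Main.v *)
Require Import Defs.
From HB Require Import structures.
From mathcomp Require Import all_boot all_order all_algebra ring.
Import GRing.Theory Num.Theory.
Local Open Scope ring_scope.
Section Circ.
Variable C : numClosedFieldType.

Definition cay (a : nat) : C := (a%:R + 'i) / (a%:R - 'i).

Lemma cay_den (a : nat) : (a%:R - 'i : C) != 0.
Proof.
rewrite subr_eq0; apply/eqP => h.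
by move: (@nonRealCi C); rewrite -h realn.
Qed.

Lemma cay_circle a : on_circle (cay a).
Proof.
rewrite /on_circle /cay normf_div.
have -> : (a%:R - 'i : C) = (a%:R + 'i)^*.
  by rewrite rmorphD /= rmorph_nat conjCi.
rewrite norm_conjC divff // normr_eq0 -conjC_eq0 rmorphD /= rmorph_nat conjCi.
exact: cay_den.
Qed.

Lemma cay_inj : injective cay.
Proof.
move=> a b /eqP; rewrite /cay eqr_div ?cay_den // => /eqP h.
have : (2 * 'i * (b%:R - a%:R) : C) = 0.
  by rewrite -(subrr ((a%:R + 'i) * (b%:R - 'i))) {2}h; ring.
move/eqP; rewrite !mulf_eq0 pnatr_eq0 (negbTE (@neq0Ci C)) /= subr_eq0 eqr_nat.
by move/eqP.
Qed.

Lemma circle_poly0 (p : {poly C}) : (forall z, on_circle z -> p.[z] = 0) -> p = 0.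
Proof.
move=> hp; apply: (@roots_geq_poly_eq0 _ p (map cay (iota 0 (size p)))).
- by apply/allP => x /mapP [a _ ->]; apply/eqP/hp/cay_circle.
- by rewrite map_inj_uniq ?iota_uniq //; apply: cay_inj.
- by rewrite size_map size_iota.
Qed.
End Circ.
Section M.
Variable C : numClosedFieldType.
Variable n : nat.

Lemma evalmxE m p (P : 'M[{poly C}]_(m, p)) z : evalmx P z = map_mx (horner_eval z) P.
Proof. by apply/matrixP => i j; rewrite !mxE. Qed.

Lemma det_evalmx (P : 'M[{poly C}]_n) z : \det (evalmx P z) = (\det P).[z].
Proof. by rewrite evalmxE det_map_mx. Qed.

Lemma evalmx_const m p (M : 'M[C]_(m, p)) z : evalmx (map_mx polyC M) z = M.
Proof. by apply/matrixP => i j; rewrite !mxE hornerC. Qed.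

Lemma det_const (P Q : 'M[{poly C}]_n) :
  (forall z, on_circle z -> evalmx P z *m evalmx Q z = 1%:M) ->
  exists c : C, c != 0 /\ forall z, on_circle z -> \det (evalmx P z) = c.
Proof.
move=> h.
have e : \det P * \det Q = 1.
  apply/eqP; rewrite -subr_eq0; apply/eqP/circle_poly0 => z hz.
  by rewrite hornerD hornerN hornerM hornerC -!det_evalmx -det_mulmx h // det1 subrr.
have : \det P \is a GRing.unit by apply/unitrP; exists (\det Q); rewrite e mulrC e.
rewrite poly_unitE => /andP [/size_poly1P [c c0 ec] _].
by exists c; split => // z _; rewrite det_evalmx ec hornerC.
Qed.

Lemma sub_mat (g1 g2 : loop C n) :
  (forall v, in_subspace g1 v -> in_subspace g2 v) ->
  exists F : 'M[{poly C}]_n, forall z, on_circle z -> g1 z = g2 z *m evalmx F z.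
Proof.
move=> h.
have : forall j : 'I_n, exists f : 'cV[{poly C}]_n,
    forall z, on_circle z -> g1 z *m delta_mx j 0 = g2 z *m evalmx f z.
  move=> j; apply: h; exists (map_mx polyC (delta_mx j 0)) => z _.
  by rewrite evalmx_const.
case/fin_all_exists => f hf.
exists (\matrix_(i, j) f j i 0) => z hz; apply/matrixP => i j.
have := congr1 (fun M : 'cV[C]_n => M i 0) (hf j z hz).
rewrite -colE /= !mxE => ->.
by apply: eq_bigr => l _; rewrite !mxE.
Qed.

Lemma det_gamma (k : 'I_n -> int) z : z != 0 -> \sum_j k j = 0 ->
  \det (@gamma_xi C n k z) = 1.
Proof.
move=> z0 hk; rewrite /gamma_xi det_diag.
have zU : z \is a GRing.unit by rewrite unitfE.
rewrite (eq_bigr (fun j => z ^ k j)); last by move=> j _; rewrite mxE.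
by rewrite -(big_morph (fun s : int => z ^ s) (exprzDr zU) (expr0z z)) hk.
Qed.

Lemma sum_k (k : 'I_n -> int) : \tr (xi_of C k) = 0 -> \sum_j k j = 0.
Proof.
rewrite /xi_of mxtrace_diag.
rewrite (eq_bigr (fun j => (Num.imaginary : C) * (k j)%:~R)); last by move=> j _; rewrite mxE.
rewrite -mulr_sumr -(raddf_sum (intmul (1:C))) => /eqP; rewrite mulf_eq0 (negbTE (@neq0Ci C)) /=.
by rewrite intr_eq0 => /eqP.
Qed.
End M.
Lemma evalmx_scale (C : numClosedFieldType) m p (c : C) (f : 'M[{poly C}]_(m, p)) z :
  evalmx (map_mx (fun q => c%:P * q) f) z = c *: evalmx f z.
Proof. by apply/matrixP => i j; rewrite !mxE hornerCM. Qed.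

Lemma circle_neq0 (C : numClosedFieldType) (z : C) : on_circle z -> z != 0.
Proof.
by rewrite /on_circle; apply: contraTneq => ->; rewrite normr0 eq_sym oner_eq0.
Qed.

Theorem mainTheorem7 (C : numClosedFieldType) (n : nat) (k : 'I_n -> int)
  (hxi : \tr (xi_of C k) = 0) :
  forall g : loop C n,
    U_xi (@in_SU C n) (@in_SL C n) k g <-> U_xi (@in_U C n) (@in_GL C n) k g.
Proof.
move=> g; split.
  case=> [[[hU hdet] h1 hl hinv] [Psi [[hSL hp hq] hs]]].
  split; first by split.
  exists Psi; split => //; split => // z hz.
  by rewrite unitmxE hSL // unitr1.
case=> [[hU h1 hl hinv] [Psi [[hGL [P hP] [Q [hPQ [Q' hQ']]]] hs]]].
have hsk := @sum_k C n k hxi.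
have [F hF] : exists F : 'M[{poly C}]_n, forall z, on_circle z ->
    g z = Psi z *m gamma_xi k z *m evalmx F z.
  exact: (@sub_mat C n g (fun z => Psi z *m gamma_xi k z) (fun v => proj1 (hs v))).
have [H hH] : exists H : 'M[{poly C}]_n, forall z, on_circle z ->
    Psi z *m gamma_xi k z = g z *m evalmx H z.
  exact: (@sub_mat C n (fun z => Psi z *m gamma_xi k z) g (fun v => proj2 (hs v))).
have [cP [cP0 hcP]] : exists c : C, c != 0 /\
    forall z, on_circle z -> \det (evalmx P z) = c.
  apply: (@det_const C n P Q') => z hz.
  by rewrite -hP // -hQ' //; exact: (hPQ z hz).1.
have [cF [cF0 hcF]] : exists c : C, c != 0 /\
    forall z, on_circle z -> \det (evalmx H z) = c.
  apply: (@det_const C n H F) => z hz.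
  have gU : ctrans (g z) *m g z = 1%:M := hU z hz.
  by rewrite -[LHS]mul1mx -{1}gU -!mulmxA (mulmxA (g z)) -hH // -hF // gU.
have hdetg : forall z, on_circle z -> \det (g z) = cP * cF^-1.
  move=> z hz.
  rewrite hF // !det_mulmx hP // hcP // det_gamma ?hsk ?circle_neq0 // mulr1.
  have gU : ctrans (g z) *m g z = 1%:M := hU z hz.
  have : \det (evalmx H z) * \det (evalmx F z) = 1.
    by rewrite -det_mulmx -[evalmx H z]mul1mx -gU -!mulmxA (mulmxA (g z)) -hH // -hF // gU det1.
  rewrite hcF // => e; congr (_ * _).
  by apply: (mulfI cF0); rewrite e mulfV.
have h1c : cP * cF^-1 = 1.
  by rewrite -(hdetg 1) ?h1 ?det1 // /on_circle normr1.
have [a [a0 ha]] : exists a : C, a != 0 /\ a ^+ n * cP = 1.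
  case: (posnP n) => n0.
    exists 1; split; first exact: oner_neq0.
    rewrite expr1n mul1r -(hcP 1); last by rewrite /on_circle normr1.
    move: (evalmx P 1); rewrite n0 => M; exact: det_mx00.
  exists (n.-root cP^-1); split; last by rewrite rootCK // mulVf.
  apply/eqP => e; have := rootCK n0 cP^-1.
  rewrite e expr0n (gtn_eqF n0) /= => /esym/eqP; rewrite invr_eq0 (negbTE cP0).
  by [].
split.
  split => //; split => // z hz.
  by rewrite hdetg.
exists (fun z => a *: Psi z); split.
  split.
  - by move=> z hz; rewrite detZ hP // hcP.
  - by exists (map_mx (fun q => a%:P * q) P) => z hz; rewrite evalmx_scale hP.
  - exists (fun z => a^-1 *: Q z); split.
      move=> z hz; have [e1 e2] := hPQ z hz.
      by split; rewrite -scalemxAl -scalemxAr scalerA ?mulVf ?mulfV // ?e1 ?e2 scale1r.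
    by exists (map_mx (fun q => a^-1%:P * q) Q') => z hz; rewrite evalmx_scale hQ'.
move=> v; rewrite hs; split => -[f hf].
  exists (map_mx (fun q => a^-1%:P * q) f) => z hz.
  rewrite hf // evalmx_scale -!scalemxAl -scalemxAr scalerA mulfV //.
  by rewrite scale1r.
exists (map_mx (fun q => a%:P * q) f) => z hz.
rewrite hf // evalmx_scale -!scalemxAl -scalemxAr.
by [].
Qed.
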